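(* Let $(\mathbb X,d,\delta)$ be a nondegenerate dilation structure and let $x\in\mathbb X$. Then the function $d^x$ is a quasimetric on $B^d(x,R)$ with the same constants $c_{\mathbb X}$ and $Q_{\mathbb X}$ (in the generalized symmetry property and the generalized triangle inequality) as the quasimetric $d$.
   Context: A quasimetric space $(\mathbb X,d)$ is a topological space $\mathbb X$ with a map $d:\mathbb X\times\mathbb X\to[0,\infty)$ such that: (i) $d(u,v)=0$ iff $u=v$; (ii) $d(u,v)\le c_{\mathbb X}\,d(v,u)$ for a constant $1\le c_{\mathbb X}<\infty$ (generalized symmetry); (iii) $d(u,v)\le Q_{\mathbb X}(d(u,w)+d(w,v))$ for a constant $1\le Q_{\mathbb X}<\infty$ (generalized triangle inequality); (iv) $d(u,v)$ is upper semicontinuous in the first argument. The topology of $\mathbb X$ is assumed to coincide with the topology induced by $d$. Write $B^d(x,r)=\{y: d(y,x)<r\}$ and $\bar B^d(x,r)$ for its closure; $\mathbb X$ is boundedly compact if closed bounded sets are compact. A dilation structure $(\mathbb X,d,\delta)$ is a complete boundedly compact quasimetric space $(\mathbb X,d)$ with $d$ continuous in both arguments, satisfying: (A0) For every $x\in\mathbb X$ and $\varepsilon\in(0,1]$ there are a neighborhood $U(x)$ of $x$ and homeomorphisms (dilations) $\delta^x_\varepsilon:U(x)\to V_\varepsilon(x)$ and $\delta^x_{\varepsilon^{-1}}:W_{\varepsilon^{-1}}(x)\to U(x)$ with $V_\varepsilon(x)\subseteq W_{\varepsilon^{-1}}(x)\subseteq U(x)$; the family $\{\delta^x_\varepsilon\}_{\varepsilon\in(0,1]}$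 is continuous in $\varepsilon$; there is $R>0$ with $\bar B^d(x,R)\subseteq U(x)$ for all $x$, and for all $\varepsilon<1$ and $\tilde r>0$ with $\bar B^d(x,\tilde r)\subseteq U(x)$ one has $B^d(x,\tilde r\varepsilon)\subseteq\delta^x_\varepsilon B^d(x,\tilde r)\subset B^d(x,\tilde r)$. (A1) For all $x$ and $y\in U(x)$: $\delta^x_\varepsilon x=x$, $\delta^x_1=\mathrm{id}$, $\lim_{\varepsilon\to0}\delta^x_\varepsilon y=x$. (A2) $\delta^x_\varepsilon\delta^x_\mu u=\delta^x_{\varepsilon\mu}u$ for $u\in U(x)$ whenever both sides are defined. (A3) For every $x$, the limit $d^x(u,v)=\lim_{\varepsilon\to0}\frac1\varepsilon d(\delta^x_\varepsilon u,\delta^x_\varepsilon v)$ exists uniformly in $u,v\in\bar B^d(x,R)$. The dilation structure is nondegenerate if $d^x(u,v)=0$ implies $u=v$. *)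

(* Defs.v *)
(* concrete reals R. The topology of X is the one induced by the
   quasimetric d (as assumed in the paper), so all topological notions are
   defined from d. *)
From Stdlib Require Import Reals List.
Open Scope R_scope.
Set Implicit Arguments.

Section QM.
Variable X : Type.
Variable d : X -> X -> R.

Definition ball (x : X) (r : R) : X -> Prop := fun y => d y x < r.

Definition is_open (A : X -> Prop) : Prop :=
  forall x, A x -> exists r, 0 < r /\ forall y, ball x r y -> A y.

Definition is_closed (A : X -> Prop) : Prop := is_open (fun x => ~ A x).

Definition nbhd (x : X) (N : X -> Prop) : Prop :=
  exists O, is_open O /\ O x /\ forall y, O y -> N y.

Definition closure (A : X -> Prop) : X -> Prop :=
  fun x => forall N, nbhd x N -> exists y, N y /\ A y.

Definition closed_ball (x : X) (r : R) : X -> Prop := closure (ball x r).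

Definition bounded (A : X -> Prop) : Prop :=
  exists x r, forall y, A y -> d y x < r.

Definition compact (K : X -> Prop) : Prop :=
  forall (I : Type) (O : I -> X -> Prop),
    (forall i, is_open (O i)) ->
    (forall x, K x -> exists i, O i x) ->
    exists l : list I, forall x, K x -> exists i, In i l /\ O i x.

Definition boundedly_compact : Prop :=
  forall A, is_closed A -> bounded A -> compact A.

Definition cauchy_seq (u : nat -> X) : Prop :=
  forall e, 0 < e -> exists N, forall m n, (N <= m)%nat -> (N <= n)%nat ->
    d (u m) (u n) < e.

Definition seq_converges (u : nat -> X) (l : X) : Prop :=
  forall Nb, nbhd l Nb -> exists N, forall n, (N <= n)%nat -> Nb (u n).

Definition complete : Prop :=
  forall u, cauchy_seq u -> exists l, seq_converges u l.

Definition usc_on (A : X -> Prop) (f : X -> R) : Prop :=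
  forall u, A u -> forall e, 0 < e ->
    exists N, nbhd u N /\ forall u', A u' -> N u' -> f u' < f u + e.

Definition quasimetric_on (A : X -> Prop) (dd : X -> X -> R) (c Q : R) : Prop :=
  1 <= c /\ 1 <= Q /\
  (forall u v, A u -> A v -> 0 <= dd u v) /\
  (forall u v, A u -> A v -> (dd u v = 0 <-> u = v)) /\
  (forall u v, A u -> A v -> dd u v <= c * dd v u) /\
  (forall u v w, A u -> A v -> A w -> dd u v <= Q * (dd u w + dd w v)) /\
  (forall v, A v -> usc_on A (fun u => dd u v)).

Definition jointly_continuous : Prop :=
  forall u v e, 0 < e -> exists N1 N2, nbhd u N1 /\ nbhd v N2 /\
    forall u' v', N1 u' -> N2 v' -> Rabs (d u' v' - d u v) < e.

Definition homeo_on (A B : X -> Prop) (f : X -> X) : Prop :=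
  (forall a, A a -> B (f a)) /\
  (forall b, B b -> exists a, A a /\ f a = b) /\
  (forall a a', A a -> A a' -> f a = f a' -> a = a') /\
  (forall a, A a -> forall N, nbhd (f a) N ->
     exists M, nbhd a M /\ forall a', A a' -> M a' -> N (f a')) /\
  (* continuity of the inverse of f on B *)
  (forall a, A a -> forall M, nbhd a M ->
     exists N, nbhd (f a) N /\ forall a', A a' -> N (f a') -> M a').

Definition image (A : X -> Prop) (f : X -> X) : X -> Prop :=
  fun y => exists a, A a /\ f a = y.

End QM.

(* Dilation structure (X, d, delta).
   - U x      : the neighbourhood U(x)
   - W x t    : the set W_t(x) for t = eps^-1 >= 1
   - delta x e: the dilation delta^x_e (for e in (0,1] defined on U x,
                for e >= 1 defined on W x e)
   - V_e(x)   : image of U x under delta x e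
   - R0       : the constant R of (A0)
   - dx x     : the limit function d^x of (A3). *)
Definition dil_dom {X : Type} (U : X -> X -> Prop) (W : X -> R -> X -> Prop)
  (x : X) (e : R) : X -> Prop :=
  fun y => 0 < e /\ (e <= 1 -> U x y) /\ (1 < e -> W x e y).

Record dilation_structure {X : Type} (d : X -> X -> R) (c Q : R)
  (U : X -> X -> Prop) (W : X -> R -> X -> Prop) (delta : X -> R -> X -> X)
  (R0 : R) (dx : X -> X -> X -> R) : Prop := {
  ds_quasimetric : quasimetric_on d (fun _ => True) d c Q;
  ds_complete : complete d;
  ds_boundedly_compact : boundedly_compact d;
  ds_continuous : jointly_continuous d;
  ds_U_nbhd : forall x, nbhd d x (U x);
  ds_homeo : forall x e, 0 < e <= 1 ->
      homeo_on d (U x) (image (U x) (delta x e)) (delta x e);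
  ds_homeo_inv : forall x e, 0 < e <= 1 ->
      homeo_on d (W x (/ e)) (U x) (delta x (/ e));
  ds_V_sub_W : forall x e y, 0 < e <= 1 ->
      image (U x) (delta x e) y -> W x (/ e) y;
  ds_W_sub_U : forall x e y, 0 < e <= 1 -> W x (/ e) y -> U x y;
  ds_cont_eps : forall x y, U x y -> forall e, 0 < e <= 1 ->
      forall N, nbhd d (delta x e y) N ->
      exists eta, 0 < eta /\ forall e', 0 < e' <= 1 -> Rabs (e' - e) < eta ->
        N (delta x e' y);
  ds_R0_pos : 0 < R0;
  ds_R0_ball : forall x y, closed_ball d x R0 y -> U x y;
  ds_ball_incl : forall x e r, 0 < e < 1 -> 0 < r ->
      (forall y, closed_ball d x r y -> U x y) ->
      (forall y, ball d x (r * e) y -> image (ball d x r) (delta x e) y) /\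
      (forall y, image (ball d x r) (delta x e) y -> ball d x r y);
  ds_fix : forall x e, 0 < e <= 1 -> delta x e x = x;
  ds_one : forall x y, U x y -> delta x 1 y = y;
  ds_lim0 : forall x y, U x y -> forall N, nbhd d x N ->
      exists eta, 0 < eta /\ forall e, 0 < e <= 1 -> e < eta -> N (delta x e y);
  ds_semigroup : forall x e mu u, 0 < e -> 0 < mu -> U x u ->
      dil_dom U W x mu u -> dil_dom U W x e (delta x mu u) ->
      dil_dom U W x (e * mu) u ->
      delta x e (delta x mu u) = delta x (e * mu) u;
  ds_A3 : forall x eps, 0 < eps -> exists eta, 0 < eta /\
      forall e, 0 < e <= 1 -> e < eta ->
      forall u v, closed_ball d x R0 u -> closed_ball d x R0 v ->
        Rabs (/ e * d (delta x e u) (delta x e v) - dx x u v) < eps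
}.

Definition nondegenerate {X : Type} (d : X -> X -> R) (R0 : R)
  (dx : X -> X -> X -> R) : Prop :=
  forall x u v, closed_ball d x R0 u -> closed_ball d x R0 v ->
    dx x u v = 0 -> u = v.

(* Main.v *)
Require Import Defs.
From Stdlib Require Import Reals Lra Psatz.
Open Scope R_scope.

Lemma nbhd_self {X : Type} {d : X -> X -> R} {x N} : nbhd d x N -> N x.
Proof. intros [O [_ [Ox HO]]]. auto. Qed.

Lemma ball_cb {X : Type} {d : X -> X -> R} {x r y} : ball d x r y -> closed_ball d x r y.
Proof. intros H N HN. exists y. split; [eapply nbhd_self; eauto | exact H]. Qed.

Lemma le_epsK a b K : 0 < K -> (forall eps, 0 < eps -> a <= b + K * eps) -> a <= b.
Proof.
  intros HK H. destruct (Rle_dec a b) as [|Hn]; [assumption|].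
  exfalso. assert (Hp : 0 < (a - b) / (2 * K)).
  { apply Rdiv_lt_0_compat; lra. }
  specialize (H _ Hp).
  assert (K * ((a - b) / (2 * K)) = (a - b) / 2) by (field; lra). lra.
Qed.

Lemma approx (X : Type) (d : X -> X -> R) (c Q : R)
  (U : X -> X -> Prop) (W : X -> R -> X -> Prop) (delta : X -> R -> X -> X)
  (R0 : R) (dx : X -> X -> X -> R) :
  dilation_structure d c Q U W delta R0 dx -> forall x eps, 0 < eps ->
  exists e, 0 < e <= 1 /\ forall u v, closed_ball d x R0 u -> closed_ball d x R0 v ->
     Rabs (/ e * d (delta x e u) (delta x e v) - dx x u v) < eps.
Proof.
  intros H x eps He. destruct (ds_A3 H x He) as [eta [Heta Hs]].
  exists (Rmin 1 (eta/2)). assert (0 < Rmin 1 (eta/2)) by (apply Rmin_glb_lt; lra).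
  assert (Rmin 1 (eta/2) <= 1) by apply Rmin_l.
  assert (Rmin 1 (eta/2) <= eta/2) by apply Rmin_r.
  split; [lra|]. intros; apply Hs; auto; lra.
Qed.

Theorem proposition1 (X : Type) (d : X -> X -> R) (c Q : R)
  (U : X -> X -> Prop) (W : X -> R -> X -> Prop) (delta : X -> R -> X -> X)
  (R0 : R) (dx : X -> X -> X -> R) :
  dilation_structure d c Q U W delta R0 dx ->
  nondegenerate d R0 dx ->
  forall x : X, quasimetric_on d (ball d x R0) (dx x) c Q.
Proof.
  intros H Hnd x.
  pose proof (ds_quasimetric H) as [Hc [HQ [Hpos [Hzero [Hsym [Htri _]]]]]].
  assert (Hpos' : forall a b, 0 <= d a b) by (intros; apply Hpos; auto).
  assert (Hap := @approx X d c Q U W delta R0 dx H x).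
  split; [exact Hc|]. split; [exact HQ|].
  split.
  { intros u v Hu Hv. apply (le_epsK _ _ 1 ltac:(lra)). intros eps Heps.
    destruct (Hap eps Heps) as [e [He Hs]].
    specialize (Hs u v (ball_cb Hu) (ball_cb Hv)).
    apply Rabs_def2 in Hs.
    assert (0 <= / e * d (delta x e u) (delta x e v)).
    { apply Rmult_le_pos; [apply Rlt_le, Rinv_0_lt_compat; lra| apply Hpos']. }
    lra. }
  split.
  { intros u v Hu Hv. split.
    - intro h. exact (Hnd x u v (ball_cb Hu) (ball_cb Hv) h).
    - intros <-.
      assert (forall eps, 0 < eps -> Rabs (dx x u u) < eps).
      { intros eps Heps. destruct (Hap eps Heps) as [e [He Hs]].
        specialize (Hs u u (ball_cb Hu) (ball_cb Hu)).
        assert (d (delta x e u) (delta x e u) = 0) by (apply Hzero; auto).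
        rewrite H0, Rmult_0_r, Rminus_0_l, Rabs_Ropp in Hs. exact Hs. }
      destruct (Req_dec (dx x u u) 0) as [|Hn]; auto.
      exfalso. specialize (H0 (Rabs (dx x u u)) (Rabs_pos_lt _ Hn)). lra. }
  split.
  { intros u v Hu Hv. apply (le_epsK _ _ (c + 1) ltac:(lra)). intros eps Heps.
    destruct (Hap eps Heps) as [e [He Hs]].
    pose proof (Hs u v (ball_cb Hu) (ball_cb Hv)) as H1.
    pose proof (Hs v u (ball_cb Hv) (ball_cb Hu)) as H2.
    apply Rabs_def2 in H1. apply Rabs_def2 in H2.
    assert (Hie : 0 <= / e) by (apply Rlt_le, Rinv_0_lt_compat; lra).
    assert (/ e * d (delta x e u) (delta x e v) <= c * (/ e * d (delta x e v) (delta x e u))).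
    { replace (c * (/ e * d (delta x e v) (delta x e u))) with (/ e * (c * d (delta x e v) (delta x e u))) by ring.
      apply Rmult_le_compat_l; auto. }
    nra. }
  split.
  { intros u v w Hu Hv Hw. apply (le_epsK _ _ (2 * Q + 1) ltac:(lra)). intros eps Heps.
    destruct (Hap eps Heps) as [e [He Hs]].
    pose proof (Hs u v (ball_cb Hu) (ball_cb Hv)) as H1.
    pose proof (Hs u w (ball_cb Hu) (ball_cb Hw)) as H2.
    pose proof (Hs w v (ball_cb Hw) (ball_cb Hv)) as H3.
    apply Rabs_def2 in H1. apply Rabs_def2 in H2. apply Rabs_def2 in H3.
    assert (Hie : 0 <= / e) by (apply Rlt_le, Rinv_0_lt_compat; lra).
    assert (/ e * d (delta x e u) (delta x e v) <= Q * (/ e * d (delta x e u) (delta x e w) + / e * d (delta x e w) (delta x e v))).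
    { replace (Q * (/ e * d (delta x e u) (delta x e w) + / e * d (delta x e w) (delta x e v))) with (/ e * (Q * (d (delta x e u) (delta x e w) + d (delta x e w) (delta x e v)))) by ring.
      apply Rmult_le_compat_l; auto. }
    nra. }
  intros v Hv u Hu eps Heps.
  assert (Heps3 : 0 < eps / 3) by lra.
  destruct (Hap _ Heps3) as [e [He Hs]].
  assert (Hcont := ds_continuous H).
  assert (Hee : 0 < e * (eps / 3)) by nra.
  destruct (Hcont (delta x e u) (delta x e v) _ Hee) as [N1 [N2 [HN1 [HN2 HN]]]].
  destruct (ds_homeo H x He) as [_ [_ [_ [Hcu _]]]].
  assert (HUu : U x u) by (apply (ds_R0_ball H); apply ball_cb; exact Hu).
  destruct (Hcu u HUu N1 HN1) as [M [HM HMp]].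
  exists M. split; [exact HM|]. intros u' Hu' Mu'.
  assert (HUu' : U x u') by (apply (ds_R0_ball H); apply ball_cb; exact Hu').
  specialize (HN _ _ (HMp u' HUu' Mu') (nbhd_self HN2)).
  pose proof (Hs u v (ball_cb Hu) (ball_cb Hv)) as H1.
  pose proof (Hs u' v (ball_cb Hu') (ball_cb Hv)) as H2.
  apply Rabs_def2 in H1. apply Rabs_def2 in H2. apply Rabs_def2 in HN.
  set (a := d (delta x e u') (delta x e v)) in *.
  set (b := d (delta x e u) (delta x e v)) in *.
  assert (Hdiff : / e * a - / e * b < eps / 3).
  { replace (eps/3) with (/ e * (e * (eps / 3))) by (field; lra).
    rewrite <- Rmult_minus_distr_l. apply Rmult_lt_compat_l; [apply Rinv_0_lt_compat; lra | lra]. }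
  lra.
Qed.
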